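(* Let $R$ be a connected graph with vertices $v_1,\dots,v_r$, let $H$ be a rooted graph on $n$ vertices, let $\alpha\in[0,1]$, and let $\rho_1(\alpha),\dots,\rho_r(\alpha)$ be the eigenvalues (with multiplicity) of $A_\alpha(R)$. Then, as multisets, \[ \mathrm{Spec}\big(A_\alpha(R\{H\})\big)=\bigcup_{j=1}^{r}\mathrm{Spec}\big(A_\alpha(H)+\rho_j(\alpha)E\big). \]
   Context: For a graph $G$ and $\alpha\in[0,1]$, $A_\alpha(G)=\alpha D(G)+(1-\alpha)A(G)$, where $D(G)$ is the diagonal matrix of vertex degrees and $A(G)$ the adjacency matrix. For a connected graph $R$ on vertices $v_1,\dots,v_r$ and a rooted graph $H$, $R\{H\}$ is the graph obtained from $R$ and $r$ copies of $H$ by identifying the root of the $i$-th copy of $H$ with $v_i$, for each $i$. Vertices of $H$ are ordered so that the root is the last ($n$-th) vertex, and $E$ is the $n\times n$ matrix with $1$ in entry $(n,n)$ (the root's diagonal position) and zeros elsewhere. $\mathrm{Spec}(M)$ denotes the multiset of eigenvalues of $M$, and unions of spectra are multiset unions. *)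

(* Defs.v *)
From HB Require Import structures.
From mathcomp Require Import all_boot all_order all_algebra.
Set Implicit Arguments. Unset Strict Implicit. Unset Printing Implicit Defensive.
Import Order.TTheory GRing.Theory Num.Theory.
Local Open Scope ring_scope.

Definition simple_graph (T : finType) (e : rel T) : Prop :=
  symmetric e /\ irreflexive e.

Definition connected_graph (T : finType) (e : rel T) : Prop :=
  forall x y, connect e x y.

Definition deg (T : finType) (e : rel T) (x : T) : nat := #|[set y | e x y]|.

Definition Aalpha (C : numClosedFieldType) (T : finType) (e : rel T) (a : C)
  : 'M[C]_#|T| :=
  \matrix_(i, j)
    (a * (i == j)%:R * (deg e (enum_val i))%:R
     + (1 - a) * (e (enum_val i) (enum_val j))%:R).

(* Rooted graph H on vertex set 'I_n.+1, root = last vertex ord_max.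
   The rooted product R{H}: vertices (i,u) = vertex u of the i-th copy of H,
   where (i, root) is identified with v_i. *)
Definition rooted_product (r n : nat) (eR : rel 'I_r) (eH : rel 'I_n.+1)
  : rel ('I_r * 'I_n.+1) :=
  fun x y => ((x.1 == y.1) && eH x.2 y.2)
          || [&& x.2 == ord_max, y.2 == ord_max & eR x.1 y.1].

Definition Eroot (C : numClosedFieldType) (n : nat) : 'M[C]_#|'I_n.+1| :=
  delta_mx (enum_rank (ord_max : 'I_n.+1)) (enum_rank (ord_max : 'I_n.+1)).

Definition Spec (C : numClosedFieldType) (m : nat) (M : 'M[C]_m) : C -> nat :=
  fun l => mup l (char_poly M).

(* Main.v *)
Require Import Defs.
From HB Require Import structures.
From mathcomp Require Import all_boot all_order all_algebra all_fingroup zify ring.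
Import Order.TTheory GRing.Theory Num.Theory.
Set Implicit Arguments. Unset Strict Implicit. Unset Printing Implicit Defensive.
Local Open Scope ring_scope.

Lemma char_poly_sim (F : comNzRingType) k (S S' M : 'M[F]_k) :
  S *m S' = 1%:M -> char_poly (S *m M *m S') = char_poly M.
Proof.
move=> SS.
rewrite /char_poly /char_poly_mx !map_mxM.
have h : ('X%:M : 'M[{poly F}]_k) = map_mx polyC S *m 'X%:M *m map_mx polyC S'.
  by rewrite mul_mx_scalar -scalemxAl -map_mxM SS map_mx1 scalemx1.
rewrite {1}h -mulmxBl -mulmxBr !det_mulmx mulrAC -det_mulmx -map_mxM SS map_mx1 det1.
by rewrite mul1r.
Qed.

Lemma det_wtrig (R : comNzRingType) k (A : 'M[R]_k) (w : 'I_k -> nat) :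
  injective w -> (forall i j, (w i < w j)%N -> A i j = 0) ->
  \det A = \prod_i A i i.
Proof.
move=> winj Az; rewrite /determinant (bigD1 (1%g : {perm 'I_k})) //=.
rewrite [X in _ + X]big1 ?addr0.
  by rewrite odd_perm1 expr0 mul1r; apply: eq_bigr => i _; rewrite perm1.
move=> s sn1.
have [i hi] : exists i, (w i < w (s i))%N.
  apply/existsP; apply: contraR sn1 => /existsPn hn.
  have le : forall i, (w (s i) <= w i ?= iff (w (s i) == w i))%N.
    by move=> i; split => //; rewrite leqNgt; apply: hn.
  have := leqif_sum (P := xpredT) (fun i _ => le i).
  have -> : (\sum_(i | xpredT i) w (s i) = \sum_(i | xpredT i) w i)%N.
    by apply/esym; apply: (reindex_inj (@perm_inj _ s)).
  case=> _; rewrite eqxx => /esym/forallP hall; apply/eqP/permP => j.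
  by rewrite perm1; apply: winj; apply/eqP; have := hall j.
by rewrite (bigD1 i) //= Az // mul0r mulr0.
Qed.

Lemma char_poly_wtrig (R : comNzRingType) k (Z : 'M[R]_k) (w : 'I_k -> nat) :
  injective w -> (forall i j, (w i < w j)%N -> Z i j = 0) ->
  char_poly Z = \prod_i ('X - (Z i i)%:P).
Proof.
move=> winj Zz; rewrite /char_poly (det_wtrig (w := w)) //.
  by apply: eq_bigr => i _; rewrite !mxE eqxx.
move=> i j lt; rewrite !mxE Zz // polyC0 subr0.
have -> : (i == j) = false by apply/eqP => e; move: lt; rewrite e ltnn.
by rewrite mulr0n.
Qed.
Lemma trig_sim (C : numClosedFieldType) k (A : 'M[C]_k) :
  exists2 P, P \in unitmx & is_trig_mx (P *m A *m invmx P).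
Proof.
case: k A => [|k] A.
  by exists 1%:M; [exact: unitmx1 | apply/is_trig_mxP => -[]].
have [P Pu Pt] := @Schur C k.+1 A isT.
exists P; first exact: unitarymx_unit.
by move: Pt; rewrite /similar_to conjumx //; exact: unitarymx_unit.
Qed.

Lemma wt_inj (m i j : nat) (u v : 'I_m) : (i * m + u = j * m + v)%N -> i = j /\ u = v.
Proof.
move=> h; have m0 : (0 < m)%N by case: m u {h v} => [[]|].
have hu := ltn_ord u; have hv := ltn_ord v.
have e1 : i = j.
  by have := congr1 (fun x => x %/ m)%N h; rewrite /= !divnMDl // !divn_small // !addn0.
split=> //; apply: val_inj => /=.
by have := congr1 (fun x => x %% m)%N h; rewrite /= !modnMDl !modn_small.
Qed.

Lemma wt_lt (m i j : nat) (u v : 'I_m) : (i * m + u < j * m + v)%N -> (i <= j)%N.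
Proof.
move=> h; have hu := ltn_ord u; have hv := ltn_ord v.
rewrite leqNgt; apply/negP => ji.
have : (j * m + v < i * m + u)%N.
  apply: (@leq_trans (j.+1 * m)); first by rewrite mulSn; lia.
  by apply: leq_trans (leq_addr _ _); rewrite leq_mul2r ji orbT.
by rewrite ltnNge ltnW.
Qed.

Lemma sum_prod (C : comNzRingType) (I J : finType) (f : I -> C) (g : J -> C) :
  \sum_i \sum_j f i * g j = (\sum_i f i) * (\sum_j g j).
Proof. by rewrite mulr_suml; apply: eq_bigr => i _; rewrite mulr_sumr. Qed.

Lemma sum_delta (C : comNzRingType) N (f : 'I_N -> C) j0 :
  \sum_i f i * (i == j0)%:R = f j0.
Proof.
rewrite (bigD1 j0) //= eqxx mulr1 big1 ?addr0 // => i /negbTE ->.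
by rewrite mulr0.
Qed.

Lemma core (C : numClosedFieldType) N m K (B : 'M[C]_N) (AH E : 'M[C]_m)
  (M : 'M[C]_K) (chi : 'I_K -> 'I_N * 'I_m) :
  bijective chi ->
  (forall k l, M k l = ((chi k).1 == (chi l).1)%:R * AH (chi k).2 (chi l).2
                       + B (chi k).1 (chi l).1 * E (chi k).2 (chi l).2) ->
  exists T : 'M[C]_N, char_poly B = \prod_i ('X - (T i i)%:P) /\
     char_poly M = \prod_i char_poly (AH + T i i *: E).
Proof.
move=> chib hM.
have [P Pu Ptrig] := trig_sim B.
set T := P *m B *m invmx P in Ptrig.
have hQ : forall i, exists2 Q, Q \in unitmx &
    is_trig_mx (Q *m (AH + T i i *: E) *m invmx Q) by move=> i; apply: trig_sim.
have [Q Qu Qtrig] := fin_all_exists2 hQ.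
exists T; split.
  by rewrite -(char_poly_trig Ptrig) /T char_poly_sim // mulmxV.
pose Y i k := (i == k)%:R *: AH + T i k *: E.
pose Z0 (x y : 'I_N * 'I_m) : C := (Q x.1 *m Y x.1 y.1 *m invmx (Q y.1)) x.2 y.2.
pose S0 (x y : 'I_N * 'I_m) := P x.1 y.1 * Q x.1 x.2 y.2.
pose S0' (x y : 'I_N * 'I_m) := invmx P x.1 y.1 * invmx (Q y.1) x.2 y.2.
pose M0 (x y : 'I_N * 'I_m) := (x.1 == y.1)%:R * AH x.2 y.2 + B x.1 y.1 * E x.2 y.2.
pose S := \matrix_(k, l) S0 (chi k) (chi l).
pose S' := \matrix_(k, l) S0' (chi k) (chi l).
pose Zt := \matrix_(k, l) Z0 (chi k) (chi l).
have sumchi : forall F : 'I_N * 'I_m -> C, \sum_k F (chi k) = \sum_x F x.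
  by move=> F; symmetry; apply: (reindex chi); exact: onW_bij.
have sumpair : forall F : 'I_N * 'I_m -> C, \sum_x F x = \sum_i \sum_u F (i, u).
  by move=> F; rewrite pair_big; apply: eq_bigr => -[].
have SS' : S *m S' = 1%:M.
  apply/matrixP => k l; rewrite !mxE.
  under eq_bigr do rewrite !mxE.
  rewrite (sumchi (fun x => S0 (chi k) x * S0' x (chi l))) sumpair.
  rewrite -(inj_eq (bij_inj chib)).
  case: (chi k) => i0 u0; case: (chi l) => j0 v0.
  rewrite /S0 /S0' /=.
  under eq_bigr do under eq_bigr do rewrite mulrACA.
  rewrite sum_prod.
  have -> : \sum_i P i0 i * invmx P i j0 = (P *m invmx P) i0 j0 by rewrite mxE.
  rewrite mulmxV // mxE xpair_eqE; case: eqP => [<-|_]; last by rewrite !mul0r.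
  have -> : \sum_j Q i0 u0 j * invmx (Q i0) j v0 = (Q i0 *m invmx (Q i0)) u0 v0.
    by rewrite mxE.
  by rewrite mulmxV // mxE mul1r.
have Yexp : forall i k u v, (Q i *m Y i k) u v =
    (i == k)%:R * (Q i *m AH) u v + T i k * (Q i *m E) u v.
  by move=> i k u v; rewrite /Y mulmxDr -!scalemxAr !mxE.
have TP : T *m P = P *m B by rewrite /T mulmxKV.
have key : forall i0 u0 j0 v0,
    \sum_i \sum_u S0 (i0, u0) (i, u) * M0 (i, u) (j0, v0) =
    \sum_i \sum_u Z0 (i0, u0) (i, u) * S0 (i, u) (j0, v0).
  move=> i0 u0 j0 v0; rewrite /S0 /M0 /Z0 /=.
  transitivity (P i0 j0 * (Q i0 *m AH) u0 v0 + (P *m B) i0 j0 * (Q i0 *m E) u0 v0).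
    transitivity (\sum_i \sum_u ((P i0 i * (i == j0)%:R) * (Q i0 u0 u * AH u v0)
        + (P i0 i * B i j0) * (Q i0 u0 u * E u v0))).
      by apply: eq_bigr => i _; apply: eq_bigr => u _; ring.
    under eq_bigr do rewrite big_split /=.
    rewrite big_split /= !sum_prod sum_delta.
    by congr (_ * _ + _ * _); rewrite mxE //; apply: eq_bigr.
  transitivity (\sum_i P i j0 * ((Q i0 *m Y i0 i *m invmx (Q i)) *m Q i) u0 v0);
    last first.
    apply: eq_bigr => i _; rewrite mxE mulr_sumr; apply: eq_bigr => u _; ring.
  under eq_bigr do rewrite (mulmxKV (Qu _)) Yexp.
  transitivity (\sum_i (P i j0 * (i == i0)%:R) * (Q i0 *m AH) u0 v0
     + \sum_i (T i0 i * P i j0) * (Q i0 *m E) u0 v0).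
    rewrite -!mulr_suml sum_delta -TP; congr (_ + _ * _).
    by rewrite mxE.
  rewrite -big_split /=; apply: eq_bigr => i _; rewrite (eq_sym i0); ring.
have SM : S *m M = Zt *m S.
  apply/matrixP => k l; rewrite !mxE.
  under eq_bigr do rewrite !mxE hM.
  under [RHS]eq_bigr do rewrite !mxE.
  rewrite (sumchi (fun x => S0 (chi k) x * M0 x (chi l))).
  rewrite (sumchi (fun x => Z0 (chi k) x * S0 x (chi l))) !sumpair.
  by case: (chi k) => i0 u0; case: (chi l) => j0 v0; exact: key.
have Zeq : S *m M *m S' = Zt by rewrite SM -mulmxA SS' mulmx1.
have prodchi : forall F : 'I_N * 'I_m -> {poly C}, \prod_k F (chi k) = \prod_x F x.
  by move=> F; symmetry; apply: (reindex chi); exact: onW_bij.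
have prodpair : forall F : 'I_N * 'I_m -> {poly C},
    \prod_x F x = \prod_i \prod_u F (i, u).
  by move=> F; rewrite pair_big; apply: eq_bigr => -[].
rewrite -(char_poly_sim M SS') Zeq.
rewrite (char_poly_wtrig (w := fun k => ((chi k).1 * m + (chi k).2)%N)).
- under eq_bigr do rewrite mxE.
  rewrite (prodchi (fun x => 'X - (Z0 x x)%:P)) prodpair.
  apply: eq_bigr => i _.
  rewrite -(char_poly_sim (AH + T i i *: E) (mulmxV (Qu i))).
  rewrite (char_poly_trig (Qtrig i)); apply: eq_bigr => u _.
  by rewrite /Z0 /Y /= eqxx scale1r.
- move=> k l /= /wt_inj [e1 e2]; apply: (bij_inj chib).
  by rewrite [chi k]surjective_pairing [chi l]surjective_pairing (val_inj e1) e2.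
- move=> k l; rewrite mxE; case: (chi k) => i u; case: (chi l) => j v /= lt.
  have := wt_lt lt; rewrite leq_eqVlt; case/orP => [/eqP/val_inj e|ij].
    subst j; move: lt; rewrite ltn_add2l => uv.
    by rewrite /Z0 /Y /= eqxx scale1r; apply: (is_trig_mxP (Qtrig i)).
  rewrite /Z0 /=; have -> : Y i j = 0.
    rewrite /Y (is_trig_mxP Ptrig) // scale0r addr0.
    by rewrite (_ : (i == j) = false) ?scale0r //; apply/negbTE; rewrite neq_ltn ij.
  by rewrite mulmx0 mul0mx mxE.
Qed.
Lemma card_sum (T : finType) (p : pred T) : #|[set y | p y]| = (\sum_y p y)%N.
Proof.
rewrite -sum1_card big_mkcond /=; apply: eq_bigr => y _.
by rewrite inE; case: (p y).
Qed.

Lemma sum_pairN (T1 T2 : finType) (F : T1 * T2 -> nat) :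
  (\sum_x F x = \sum_i \sum_u F (i, u))%N.
Proof. by rewrite pair_big; apply: eq_bigr => -[]. Qed.

Lemma deg_rp r n (eR : rel 'I_r) (eH : rel 'I_n.+1) i u :
  irreflexive eR ->
  deg (rooted_product eR eH) (i, u) = (deg eH u + (u == ord_max) * deg eR i)%N.
Proof.
move=> irr; rewrite /deg !card_sum sum_pairN /=.
rewrite /rooted_product /=.
transitivity (\sum_j \sum_(v : 'I_n.+1) ((i == j) && eH u v : nat) + \sum_j \sum_(v : 'I_n.+1) ([&& u == ord_max, v == ord_max & eR i j] : nat))%N.
  rewrite -big_split /=; apply: eq_bigr => j _; rewrite -big_split /=; apply: eq_bigr => v _.
  by have [<-|_] := eqVneq i j; rewrite /= ?irr ?andbF ?orbF ?addn0.
congr (_ + _)%N.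
  rewrite (bigD1 i) //= [X in (_ + X)%N]big1 ?addn0.
    by apply: eq_bigr => v _; rewrite eqxx.
  by move=> j ji; apply: big1 => v _; rewrite eq_sym (negbTE ji).
rewrite big_distrr /=; apply: eq_bigr => j _.
rewrite (bigD1 ord_max) //= [X in (_ + X)%N]big1 ?addn0.
  by rewrite eqxx; case: (u == ord_max); case: (eR i j).
by move=> v vn; rewrite (negbTE vn) andbF.
Qed.

Definition chi r n (k : 'I_#|{: 'I_r * 'I_n.+1}|) : 'I_#|'I_r| * 'I_#|'I_n.+1| :=
  (enum_rank (enum_val k).1, enum_rank (enum_val k).2).

Lemma entry (C : numClosedFieldType) r n (eR : rel 'I_r) (eH : rel 'I_n.+1) (a : C) :
  irreflexive eR ->
  forall k l, Aalpha (rooted_product eR eH) a k l =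
   ((chi k).1 == (chi l).1)%:R * Aalpha eH a (chi k).2 (chi l).2
   + Aalpha eR a (chi k).1 (chi l).1 * Eroot C n (chi k).2 (chi l).2.
Proof.
move=> irr k l; rewrite /Aalpha /Eroot /chi !mxE /= !enum_rankK !(inj_eq enum_rank_inj).
rewrite -[k == l](inj_eq enum_val_inj).
case: (enum_val k) => i u; case: (enum_val l) => j v /=.
rewrite deg_rp // xpair_eqE /rooted_product /=.
have [<-|ij] := eqVneq i j; rewrite ?irr /= ?andbF ?orbF ?andbT; last first.
  by case: (u == ord_max); case: (v == ord_max); case: (eR i j);
    rewrite /= ?mulr0 ?mul0r ?mulr1 ?mul1r ?addr0 ?add0r.
have [<-|uv] := eqVneq u v.
  by rewrite andbb natrD natrM; case: (u == ord_max); rewrite /=; ring.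
have [eu|nu] := eqVneq u ord_max; have [ev|nv] := eqVneq v ord_max;
  rewrite /= ?mulr0 ?mul0r ?mulr1 ?mul1r ?addr0 ?add0r //.
by move: uv; rewrite eu ev eqxx.
Qed.

Lemma mup_prod (F : fieldType) (I : finType) x (G : I -> {poly F}) :
  (forall i, G i != 0) -> mup x (\prod_i G i) = (\sum_i mup x (G i))%N.
Proof.
move=> nz.
suff [] : \prod_i G i != 0 /\ mup x (\prod_i G i) = (\sum_i mup x (G i))%N by [].
apply: (big_ind2 (fun p k => p != 0 /\ mup x p = k)).
- by split; [exact: oner_neq0 | apply: mupNroot; rewrite root1].
- move=> p1 k1 p2 k2 [n1 <-] [n2 <-]; split; first exact: mulf_neq0.
  exact: mupM.
- by move=> i _; split.
Qed.

Lemma chi_bij r n : bijective (@chi r n).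
Proof.
exists (fun x => enum_rank (enum_val x.1, enum_val x.2)).
  by move=> k; rewrite /chi /= !enum_rankK -surjective_pairing enum_valK.
by move=> [x1 x2]; rewrite /chi enum_rankK /= !enum_valK.
Qed.

Theorem theorem1 (C : numClosedFieldType) (r n : nat)
  (eR : rel 'I_r) (eH : rel 'I_n.+1) (a : C) (rho : 'I_r -> C) :
  simple_graph eR -> connected_graph eR -> simple_graph eH ->
  0 <= a <= 1 ->
  (forall l : C, Spec (Aalpha eR a) l = #|[pred j | rho j == l]|) ->
  forall l : C,
    Spec (Aalpha (rooted_product eR eH) a) l
    = (\sum_(j < r) Spec (Aalpha eH a + rho j *: Eroot C n) l)%N.
Proof.
move=> [_ irrR] _ _ _ hspec l.
have [T [hB hM]] := core (chi_bij r n) (entry eH a irrR).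
rewrite /Spec hM mup_prod; last by move=> i; exact: monic_neq0 (char_poly_monic _).
pose f c := mup l (char_poly (Aalpha eH a + c *: Eroot C n)).
rewrite -(big_map (fun i => T i i) xpredT f) -(big_map rho xpredT f).
apply: perm_big; apply/allP => c _; apply/eqP.
rewrite -mu_prod_XsubC big_map -hB.
have := hspec c; rewrite /Spec => ->.
rewrite count_map -sum1_card -sum1_count.
by apply: eq_bigr.
Qed.
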